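(* Let $\Lambda$ be a finite connected graph with $N$ vertices (sites), let $\mathfrak{h}$ be a finite-dimensional Hilbert space, and let $\mathcal{H}=\bigotimes_{x\in\Lambda}\mathfrak{h}_x$ with each $\mathfrak{h}_x$ a copy of $\mathfrak{h}$. Let $\mathfrak{h}^s\subset\mathfrak{h}$ be a subspace, $\mathfrak{h}^s_x\subset\mathfrak{h}_x$ its copy at site $x$, and let $\mathrm{Sym}^N(\mathfrak{h}^s)\subset\bigotimes_{x\in\Lambda}\mathfrak{h}^s_x\subset\mathcal{H}$ be the totally symmetric subspace. If a linear operator $\hat{O}$ on $\mathcal{H}$ satisfies $\hat{O}v=0$ for all $v\in\mathrm{Sym}^N(\mathfrak{h}^s)$, then $\hat{O}$ can be written as $$\hat{O}=\sum_{x\in\Lambda}\hat{o}^{(1)}_{[x]}\hat{P}_x+\sum_{\langle x,y\rangle}\hat{o}^{(2)}_{[xy]}\hat{P}_{xy},$$ where the second sum runs over pairs of nearest-neighbour (adjacent) sites, each $\hat{P}_x$ is an orthogonal projector acting non-trivially only on site $x$, each $\hat{P}_{xy}$ is an orthogonal projector acting non-trivially only on the pair of sites $x,y$, every $\hat{P}_x$ and $\hat{P}_{xy}$ annihilates $\mathrm{Sym}^N(\mathfrak{h}^s)$, and $\hat{o}^{(1)}_{[x]},\hat{o}^{(2)}_{[xy]}$ are some linear operators on $\mathcal{H}$ (not required to be local).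
   Context: For a permutation $\sigma\in\mathfrak{S}_N$ of the sites, $\hat{\sigma}$ denotes the operator on $\mathcal{H}$ permuting tensor factors: $\hat{\sigma}\bigotimes_{x}|e_x\rangle_x=\bigotimes_x|e_{\sigma(x)}\rangle_x$. The totally symmetric subspace is $\mathrm{Sym}^N(\mathfrak{h}^s)=\{v\in\bigotimes_{x\in\Lambda}\mathfrak{h}^s_x:\hat{\sigma}v=v\ \forall\sigma\in\mathfrak{S}_N\}$, viewed as a subspace of $\mathcal{H}$. An operator ''annihilates'' a subspace if it maps every vector of it to $0$. *)

(* Defs.v *)
(* Concrete model of the spin system:
   sites Λ = 'I_N, one-site space h = C^d (standard basis 'I_d, standard
   inner product), H = ⊗_x h_x with product basis indexed by
   configurations b : {ffun 'I_N -> 'I_d}.  Operators on H are given by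
   their matrix kernels in that basis. *)
From HB Require Import structures.
From mathcomp Require Import all_boot all_order all_algebra all_fingroup.
Set Implicit Arguments. Unset Strict Implicit. Unset Printing Implicit Defensive.
Import Order.TTheory GRing.Theory Num.Theory.
Local Open Scope ring_scope.

Section Defs.
Variables (C : numClosedFieldType) (N d : nat).

Definition conf := {ffun 'I_N -> 'I_d}.
Definition vec := conf -> C.
Definition op := conf -> conf -> C.

Definition opapply (A : op) (v : vec) : vec := fun a => \sum_(b : conf) A a b * v b.
Definition opmul (A B : op) : op := fun a b => \sum_(c : conf) A a c * B c b.
Definition adjoint (A : op) : op := fun a b => (A b a)^*.

Definition is_orth_proj (P : op) : Prop :=
  (forall a b, opmul P P a b = P a b) /\ (forall a b, adjoint P a b = P a b).

Definition site1 (x : 'I_N) (p : 'M[C]_d) : op := fun a b =>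
  p (a x) (b x) * (if [forall z, (z != x) ==> (a z == b z)] then 1 else 0).
(* q acting on the pair of sites x,y (q i j k l = <e_i ⊗ e_j| q |e_k ⊗ e_l>),
   identity on all other sites *)
Definition site2 (x y : 'I_N) (q : 'I_d -> 'I_d -> 'I_d -> 'I_d -> C) : op :=
  fun a b => q (a x) (a y) (b x) (b y) *
    (if [forall z, ((z != x) && (z != y)) ==> (a z == b z)] then 1 else 0).

Definition acts_on1 (x : 'I_N) (P : op) : Prop :=
  exists p : 'M[C]_d, forall a b, P a b = site1 x p a b.
Definition acts_on2 (x y : 'I_N) (P : op) : Prop :=
  exists q, forall a b, P a b = site2 x y q a b.

Definition prod_vec (u : 'I_N -> 'rV[C]_d) : vec :=
  fun b => \prod_(x : 'I_N) u x 0 (b x).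

(* the subspace h^s of h = C^d is the row space of S;
   ⊗_x h^s_x = span of product vectors with all factors in h^s *)
Definition in_tensor (S : 'M[C]_d) (v : vec) : Prop :=
  exists (n : nat) (c : 'I_n -> C) (u : 'I_n -> 'I_N -> 'rV[C]_d),
    (forall i x, (u i x <= S)%MS) /\
    (forall b, v b = \sum_(i < n) c i * prod_vec (u i) b).

(* hat sigma : basis vector e_b  |->  e_(b o sigma) *)
Definition hatperm (s : 'S_N) : op :=
  fun a b => if a == [ffun x => b (s x)] then 1 else 0.

Definition in_Sym (S : 'M[C]_d) (v : vec) : Prop :=
  in_tensor S v /\ forall (s : 'S_N) a, opapply (hatperm s) v a = v a.

Definition annihilates_Sym (S : 'M[C]_d) (O : op) : Prop :=
  forall v, in_Sym S v -> forall a, opapply O v a = 0.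

End Defs.

(* Main.v *)
Require Import Defs.
From HB Require Import structures.
From mathcomp Require Import all_boot all_order all_algebra all_fingroup.
Set Implicit Arguments. Unset Strict Implicit. Unset Printing Implicit Defensive.
Import Order.TTheory GRing.Theory Num.Theory Num.Def.
Local Open Scope ring_scope.

Section Site.
Variables (C : numClosedFieldType) (N d : nat).
Local Notation conf := (conf N d).
Local Notation op := (op C N d).
Local Notation vec := (vec C N d).

Definition upd (a : conf) (x : 'I_N) (j : 'I_d) : conf :=
  [ffun z => if z == x then j else a z].

Lemma upd_at a x j : upd a x j x = j.
Proof. by rewrite ffunE eqxx. Qed.
Lemma upd_off a x j z : z != x -> upd a x j z = a z.
Proof. by move=> h; rewrite ffunE (negbTE h). Qed.
Lemma upd_id a x : upd a x (a x) = a.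
Proof. by apply/ffunP=> z; rewrite ffunE; case: eqP => // ->. Qed.

Lemma sum_site1 (F : conf -> C) x (a : conf) :
  \sum_(b : conf) F b * (if [forall z, (z != x) ==> (a z == b z)] then 1 else 0)
  = \sum_(j : 'I_d) F (upd a x j).
Proof.
rewrite (partition_big (fun b : conf => b x) predT) //=.
apply: eq_bigr => j _.
rewrite (bigD1 (upd a x j)) /=; last by rewrite upd_at.
rewrite big1 ?addr0.
  have -> : [forall z, (z != x) ==> (a z == upd a x j z)].
    by apply/forallP => z; apply/implyP => h; rewrite upd_off.
  by rewrite mulr1.
move=> b /andP [/eqP bx nb].
case: ifP; rewrite ?mulr0 // => /forallP h.
exfalso; move/eqP: nb; apply; apply/ffunP => z; rewrite ffunE.
case: eqP => [->|/eqP nz] //.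
by move/implyP: (h z) => /(_ nz) /eqP.
Qed.

Lemma sum_site1' (F : conf -> C) x (a : conf) :
  \sum_(b : conf) F b * (if [forall z, (z != x) ==> (b z == a z)] then 1 else 0)
  = \sum_(j : 'I_d) F (upd a x j).
Proof.
rewrite -(sum_site1 F x a); apply: eq_bigr => b _.
have -> : [forall z, (z != x) ==> (b z == a z)] = [forall z, (z != x) ==> (a z == b z)].
  by apply/forallP/forallP => h z; move: (h z); case: (z != x) => //=; rewrite eq_sym.
by [].
Qed.


Lemma site1_apply x (p : 'M[C]_d) (v : vec) a :
  opapply (site1 x p) v a = \sum_j p (a x) j * v (upd a x j).
Proof.
rewrite /opapply /site1.
rewrite (eq_bigr (fun b : conf => (p (a x) (b x) * v b) *
   (if [forall z, (z != x) ==> (a z == b z)] then 1 else 0))); last first.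
  by move=> b _; rewrite mulrAC.
by rewrite sum_site1; apply: eq_bigr => j _; rewrite upd_at.
Qed.

Lemma agree_upd x (a b : conf) j :
  [forall z, (z != x) ==> (upd a x j z == b z)] =
  [forall z, (z != x) ==> (a z == b z)].
Proof.
apply/forallP/forallP => h z; move: (h z); case: (boolP (z != x)) => //= nz;
by rewrite upd_off.
Qed.

Lemma site1_mul x (p p' : 'M[C]_d) (a b : conf) :
  opmul (site1 x p) (site1 x p') a b = site1 x (p *m p') a b.
Proof.
rewrite /opmul /site1.
rewrite (eq_bigr (fun c : conf => (p (a x) (c x) * (p' (c x) (b x) *
   (if [forall z, (z != x) ==> (c z == b z)] then 1 else 0))) *
   (if [forall z, (z != x) ==> (a z == c z)] then 1 else 0))); last first.
  by move=> c _; rewrite mulrAC mulrA.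
rewrite sum_site1 mxE mulr_suml; apply: eq_bigr => j _.
by rewrite upd_at agree_upd mulrA.
Qed.

Lemma site1_adj x (p : 'M[C]_d) (a b : conf) :
  adjoint (site1 x p) a b = site1 x (\matrix_(i, j) (p j i)^*) a b.
Proof.
rewrite /adjoint /site1 mxE rmorphM /=; congr (_ * _).
have -> : [forall z, (z != x) ==> (b z == a z)] = [forall z, (z != x) ==> (a z == b z)].
  by apply/forallP/forallP => h z; move: (h z); case: (z != x) => //=; rewrite eq_sym.
by case: ifP; rewrite ?conjC1 ?conjC0.
Qed.

Lemma opapply_tensor (A : op) (v : vec) n (c : 'I_n -> C) u :
  (forall b, v b = \sum_(i < n) c i * prod_vec (u i) b) ->
  forall a, opapply A v a = \sum_(i < n) c i * opapply A (prod_vec (u i)) a.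
Proof.
move=> hv a; rewrite /opapply.
rewrite (eq_bigr (fun b : conf => \sum_(i < n) A a b * (c i * prod_vec (u i) b))); last first.
  by move=> b _; rewrite hv mulr_sumr.
rewrite exchange_big; apply: eq_bigr => i _; rewrite mulr_sumr.
by apply: eq_bigr => b _; rewrite mulrCA.
Qed.

Lemma site1_prod x (p : 'M[C]_d) (u : 'I_N -> 'rV[C]_d) a :
  opapply (site1 x p) (prod_vec u) a =
  (\sum_j p (a x) j * u x 0 j) * \prod_(z | z != x) u z 0 (a z).
Proof.
rewrite site1_apply mulr_suml; apply: eq_bigr => j _.
rewrite /prod_vec (bigD1 x) //= upd_at mulrA; congr (_ * _).
by apply: eq_bigr => z nz; rewrite upd_off.
Qed.


Section Tensor.
Variables (p q : 'M[C]_d) (hq : forall i j, q i j = (i == j)%:R - p i j).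
Variable (v : vec) (hv : forall x a, opapply (site1 x p) v a = 0).

Lemma sum_delta (i : 'I_d) (f : 'I_d -> C) : \sum_j (i == j)%:R * f j = f i.
Proof.
rewrite (bigD1 i) //= eqxx mul1r big1 ?addr0 // => j nj.
by rewrite eq_sym (negbTE nj) mul0r.
Qed.

Lemma q_fix x c : \sum_(b : conf) site1 x q c b * v b = v c.
Proof.
have := site1_apply x q v c; rewrite /opapply => ->.
have := hv x c; rewrite site1_apply => h0.
rewrite (eq_bigr (fun j => (c x == j)%:R * v (upd c x j) - p (c x) j * v (upd c x j))); last first.
  by move=> j _; rewrite hq mulrBl.
by rewrite sumrB h0 subr0 sum_delta upd_id.
Qed.

Definition Kk (k : nat) (a b : conf) : C :=
  (\prod_(x : 'I_N | (x < k)%N) q (a x) (b x)) *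
  (if [forall z : 'I_N, (k <= z)%N ==> (a z == b z)] then 1 else 0).

Lemma Kk0 a b : Kk 0 a b = (a == b)%:R.
Proof.
rewrite /Kk big1 ?mul1r //.
have -> : [forall z : 'I_N, (0 <= z)%N ==> (a z == b z)] = (a == b).
  apply/forallP/eqP => [h|-> z]; last by rewrite eqxx implybT.
  by apply/ffunP => z; apply/eqP; exact: (h z).
by case: eqP.
Qed.

Lemma KkS k (hk : (k < N)%N) a b :
  \sum_(c : conf) Kk k a c * site1 (Ordinal hk) q c b = Kk k.+1 a b.
Proof.
set x0 := Ordinal hk.
rewrite /site1.
rewrite (eq_bigr (fun c : conf => (Kk k a c * q (c x0) (b x0)) *
   (if [forall z, (z != x0) ==> (c z == b z)] then 1 else 0))); last first.
  by move=> c _; rewrite mulrA.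
rewrite sum_site1'.
have E : forall j, [forall z : 'I_N, (k <= z)%N ==> (a z == upd b x0 j z)] =
   (a x0 == j) && [forall z : 'I_N, (k.+1 <= z)%N ==> (a z == b z)].
  move=> j; apply/forallP/andP => [h|[/eqP e h] z].
    split; first by move: (h x0); rewrite upd_at /= leqnn.
    apply/forallP => z; apply/implyP => kz.
    have nz : z != x0 by apply/eqP => ez; move: kz; rewrite ez /= ltnn.
    by move: (h z); rewrite upd_off // (ltnW kz).
  case: (eqVneq z x0) => [->|nz]; first by rewrite upd_at e eqxx implybT.
  rewrite upd_off //; apply/implyP => kz; move/forallP: h => /(_ z) /implyP; apply.
  by rewrite ltn_neqAle kz andbT; apply: contra nz => /eqP e'; apply/eqP/val_inj.
have P : forall j, \prod_(x : 'I_N | (x < k)%N) q (a x) (upd b x0 j x) =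
                   \prod_(x : 'I_N | (x < k)%N) q (a x) (b x).
  move=> j; apply: eq_bigr => x xk; rewrite upd_off //.
  by apply/eqP => ex; move: xk; rewrite ex /= ltnn.
rewrite /Kk (eq_bigr (fun j => (a x0 == j)%:R *
   ((\prod_(x : 'I_N | (x < k)%N) q (a x) (b x)) *
    (if [forall z : 'I_N, (k.+1 <= z)%N ==> (a z == b z)] then 1 else 0) * q j (b x0))));
  last first.
  move=> j _; rewrite E P upd_at.
  by case: eqP => _ /=; case: ifP => _; rewrite ?(mul1r, mul0r, mulr1, mulr0).
rewrite sum_delta [in RHS](bigD1 x0) /=; last by rewrite /x0 /= ltnSn.
rewrite mulrAC; congr (_ * _); rewrite mulrC; congr (_ * _).
apply: eq_bigl => x; rewrite ltnS.
apply/idP/andP => [h|[h1 h2]].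
  split; first exact: ltnW.
  by apply/eqP => e; move: h; rewrite e /= ltnn.
rewrite ltn_neqAle h1 andbT; apply: contra h2 => /eqP e; apply/eqP/val_inj.
by rewrite /= e.
Qed.

Lemma v_Kk k : (k <= N)%N -> forall a, v a = \sum_(b : conf) Kk k a b * v b.
Proof.
elim: k => [_ a|k IH hk a].
  rewrite (bigD1 a) //= Kk0 eqxx mul1r big1 ?addr0 // => b nb.
  by rewrite Kk0 eq_sym (negbTE nb) mul0r.
rewrite (IH (ltnW hk) a).
rewrite (eq_bigr (fun c : conf => \sum_(b : conf) Kk k a c * (site1 (Ordinal hk) q c b * v b)));
  last by move=> c _; rewrite -(q_fix (Ordinal hk) c) mulr_sumr.
rewrite exchange_big; apply: eq_bigr => b _.
by rewrite -KkS mulr_suml; apply: eq_bigr => c _; rewrite mulrA.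
Qed.

Lemma v_Q a : v a = \sum_(b : conf) (\prod_(x : 'I_N) q (a x) (b x)) * v b.
Proof.
rewrite (v_Kk (leqnn N) a); apply: eq_bigr => b _; rewrite /Kk.
have -> : [forall z : 'I_N, (N <= z)%N ==> (a z == b z)].
  by apply/forallP => z; rewrite leqNgt ltn_ord.
by rewrite mulr1; congr (_ * _); apply: eq_bigl => x; rewrite ltn_ord.
Qed.

End Tensor.

Definition cperm (a : conf) (s : 'S_N) : conf := [ffun z => a (s z)].

Lemma cpermM (a : conf) s t : cperm (cperm a s) t = cperm a (t * s).
Proof. by apply/ffunP => z; rewrite !ffunE permM. Qed.

Lemma cperm1 (a : conf) : cperm a 1 = a.
Proof. by apply/ffunP => z; rewrite !ffunE perm1. Qed.

Lemma cpermK (a : conf) s : cperm (cperm a s) s^-1 = a.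
Proof. by rewrite cpermM mulVg cperm1. Qed.

Lemma cpermKV (a : conf) s : cperm (cperm a s^-1) s = a.
Proof. by rewrite cpermM mulgV cperm1. Qed.

Lemma cperm_eq (a b : conf) s : (a == cperm b s) = (b == cperm a s^-1).
Proof.
apply/eqP/eqP => [->|->]; first by rewrite cpermK.
by rewrite cpermKV.
Qed.

Lemma if_nat (c : bool) : (if c then 1 else 0) = c%:R :> C.
Proof. by case: c. Qed.

Lemma sum_cperm (a : conf) s (f : conf -> C) :
  \sum_(b : conf) (a == cperm b s)%:R * f b = f (cperm a s^-1).
Proof.
rewrite (bigD1 (cperm a s^-1)) //= cpermKV eqxx mul1r big1 ?addr0 // => b nb.
by rewrite cperm_eq (negbTE nb) mul0r.
Qed.

Lemma sum_eq (a : conf) (f : conf -> C) :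
  \sum_(b : conf) (a == b)%:R * f b = f a.
Proof.
rewrite (bigD1 a) //= eqxx mul1r big1 ?addr0 // => b nb.
by rewrite eq_sym (negbTE nb) mul0r.
Qed.

Lemma hatperm_apply s (v : vec) a :
  opapply (hatperm C s) v a = v (cperm a s^-1).
Proof.
rewrite /opapply -(sum_cperm a s v); apply: eq_bigr => b _.
by rewrite /hatperm if_nat.
Qed.

Definition q2 : 'I_d -> 'I_d -> 'I_d -> 'I_d -> C := fun i j k l =>
  2^-1 * (((i == k) && (j == l))%:R - ((i == l) && (j == k))%:R).

Definition Roff x y (a b : conf) :=
  [forall z, ((z != x) && (z != y)) ==> (a z == b z)].

Lemma eq_conf_split x y (a b : conf) : x != y ->
  (a == b) = [&& a x == b x, a y == b y & Roff x y a b].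
Proof.
move=> nxy; apply/eqP/and3P => [->|[/eqP h1 /eqP h2 /forallP h3]].
  by split => //; apply/forallP => z; rewrite eqxx implybT.
apply/ffunP => z; case: (eqVneq z x) => [->//|nzx].
case: (eqVneq z y) => [->//|nzy].
by move: (h3 z); rewrite nzx nzy /= => /eqP.
Qed.

Lemma Roff_cperm x y (a b : conf) :
  Roff x y a (cperm b (tperm x y)) = Roff x y a b.
Proof.
apply/forallP/forallP => h z; move: (h z); case: (boolP ((z != x) && (z != y))) => //=;
  case/andP => nzx nzy; rewrite ffunE tpermD // eq_sym //.
Qed.

Lemma A2_kernel x y (a b : conf) : x != y ->
  site2 x y q2 a b = 2^-1 * ((a == b)%:R - (a == cperm b (tperm x y))%:R).
Proof.
move=> nxy; rewrite /site2 /q2 -/(Roff x y a b) if_nat.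
rewrite (eq_conf_split a b nxy) (eq_conf_split a (cperm b (tperm x y)) nxy).
rewrite Roff_cperm !ffunE tpermL tpermR.
case: (Roff x y a b); rewrite ?andbT ?andbF ?subrr ?mulr0 ?mulr1 //.
Qed.

Lemma A2_apply x y (v : vec) a : x != y ->
  opapply (site2 x y q2) v a = 2^-1 * (v a - v (cperm a (tperm x y))).
Proof.
move=> nxy; rewrite /opapply.
rewrite (eq_bigr (fun b : conf => 2^-1 * ((a == b)%:R * v b) -
     2^-1 * ((a == cperm b (tperm x y))%:R * v b))); last first.
  by move=> b _; rewrite A2_kernel // -!mulrA -mulrBr mulrBl.
by rewrite sumrB -!mulr_sumr sum_eq sum_cperm tpermV mulrBr.
Qed.

Lemma cperm_inj s : injective (fun a : conf => cperm a s).
Proof. by move=> a b /= h; rewrite -(cpermK a s) h cpermK. Qed.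

Lemma A2_kernel_swap x y (a b : conf) : x != y ->
  site2 x y q2 (cperm a (tperm x y)) b = - site2 x y q2 a b.
Proof.
move=> nxy; rewrite !A2_kernel //.
have -> : (cperm a (tperm x y) == b) = (a == cperm b (tperm x y)).
  by rewrite eq_sym cperm_eq tpermV.
have -> : (cperm a (tperm x y) == cperm b (tperm x y)) = (a == b).
  by apply/eqP/eqP => [/cperm_inj|->].
by rewrite -mulrN opprB.
Qed.

Lemma A2_mul x y (a b : conf) : x != y ->
  opmul (site2 x y q2) (site2 x y q2) a b = site2 x y q2 a b.
Proof.
move=> nxy; rewrite /opmul.
rewrite (eq_bigr (fun c : conf => 2^-1 * ((a == c)%:R * site2 x y q2 c b) -
     2^-1 * ((a == cperm c (tperm x y))%:R * site2 x y q2 c b))); last first.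
  by move=> c _; rewrite A2_kernel // -!mulrA -mulrBr mulrBl.
rewrite sumrB -!mulr_sumr sum_eq sum_cperm tpermV A2_kernel_swap //.
by rewrite mulrN opprK -mulrDr -mulr2n -(mulr_natl (site2 x y q2 a b) 2) mulrA mulVf ?mul1r // pnatr_eq0.
Qed.

Lemma A2_adj x y (a b : conf) : x != y ->
  adjoint (site2 x y q2) a b = site2 x y q2 a b.
Proof.
move=> nxy; rewrite /adjoint !A2_kernel //.
rewrite rmorphM rmorphB /= fmorphV !conjC_nat eq_sym; congr (_ * (_ - _)).
  by rewrite /= conjC_nat.
by rewrite cperm_eq tpermV.
Qed.

Lemma A2_annih (S : 'M[C]_d) (x y : 'I_N) : x != y -> annihilates_Sym S (site2 x y q2).
Proof.
move=> nxy v [_ hs] a; rewrite A2_apply //.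
have := hs (tperm x y) a; rewrite hatperm_apply tpermV => ->.
by rewrite subrr mulr0.
Qed.

Lemma site1_annih (S : 'M[C]_d) (p : 'M[C]_d) (x : 'I_N) :
  (forall u : 'rV[C]_d, (u <= S)%MS -> forall i, \sum_j p i j * u 0 j = 0) ->
  annihilates_Sym S (site1 x p).
Proof.
move=> hp v [[n [c [u [uS hv]]]] _] a.
rewrite (opapply_tensor _ hv) big1 // => i _.
by rewrite site1_prod hp // mul0r mulr0.
Qed.

Lemma site1_orth (p : 'M[C]_d) (x : 'I_N) :
  p *m p = p -> (forall i j, (p j i)^* = p i j) -> is_orth_proj (site1 x p).
Proof.
move=> hpp hh; split => a b; first by rewrite site1_mul hpp.
rewrite site1_adj; congr (site1 x _ a b); apply/matrixP => i j.
by rewrite mxE hh.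
Qed.

Section Perm.
Variables (adj : rel 'I_N) (adj_sym : symmetric adj) (adj_irr : irreflexive adj)
  (adj_conn : forall x y : 'I_N, connect adj x y).
Variable (v : vec)
  (hA : forall x y : 'I_N, (x < y)%N -> adj x y -> forall a, opapply (site2 x y q2) v a = 0).

Definition Gs (s : 'S_N) := forall a, v (cperm a s) = v a.

Lemma Gs1 : Gs 1.
Proof. by move=> a; rewrite cperm1. Qed.

Lemma GsM s t : Gs s -> Gs t -> Gs (s * t).
Proof. by move=> hs ht a; rewrite -cpermM hs ht. Qed.

Lemma Gs_edge x y : adj x y -> Gs (tperm x y).
Proof.
move=> exy.
have nxy : x != y by apply/eqP => e; move: exy; rewrite e adj_irr.
have key : forall x y : 'I_N, (x < y)%N -> adj x y -> Gs (tperm x y).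
  move=> x' y' lt e' a; have nxy' : x' != y' by rewrite neq_ltn lt.
  have := hA lt e' a; rewrite A2_apply // => /eqP.
  rewrite mulf_eq0 invr_eq0 pnatr_eq0 /= subr_eq0 => /eqP ->. by [].
case: (ltngtP x y) => [lt|gt|/val_inj e]; first exact: key.
  by rewrite tpermC; apply: key => //; rewrite adj_sym.
by rewrite e eqxx in nxy.
Qed.

Lemma Gs_tperm x y : Gs (tperm x y).
Proof.
have /connectP [p pth ->] := adj_conn x y.
elim: p x pth => [|z p IH] x /=; first by rewrite tperm1 => _; exact: Gs1.
case/andP => exz pth; set w := last z p.
have IHz := IH z pth; rewrite -/w in IHz.
case: (eqVneq x w) => [->|nxy]; first by rewrite tperm1; exact: Gs1.
case: (eqVneq z w) => [ezy|nzy]; first by rewrite -ezy; exact: Gs_edge.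
have nxz : x != z by apply/eqP => e; move: exz; rewrite e adj_irr.
have -> : tperm x w = ((tperm x z)^-1 * tperm z w * tperm x z)%g.
  by rewrite -mulgA -conjgE tpermJ tpermR tpermD.
by apply: GsM; [apply: GsM => //; rewrite tpermV|]; exact: Gs_edge.
Qed.

Lemma Gs_all s : Gs s.
Proof.
case: (prod_tpermP s) => ts -> _.
elim: ts => [|t ts IH]; first by rewrite big_nil; exact: Gs1.
by rewrite big_cons; apply: GsM => //; exact: Gs_tperm.
Qed.

Lemma v_sym s a : opapply (hatperm C s) v a = v a.
Proof. by rewrite hatperm_apply Gs_all. Qed.

End Perm.
End Site.
Section Proj.
Variables (C : numClosedFieldType) (d : nat) (S : 'M[C]_d).

Definition Bs := schmidt (row_base S).
Definition qS : 'M[C]_d := Bs^T *m map_mx conjC Bs.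
Definition pS : 'M[C]_d := 1%:M - qS.

Lemma Bs_unit : map_mx conjC Bs *m Bs^T = 1%:M.
Proof.
have /unitarymxP h := schmidt_unitarymx (row_base S) (rank_leq_col S).
rewrite -/Bs in h.
apply/matrixP => i j; have := congr1 (fun M : 'M[C]_(\rank S) => M j i) h.
rewrite !mxE => hh; rewrite eq_sym -hh.
by apply: eq_bigr => k _; rewrite !mxE mulrC.
Qed.

Lemma Bs_eq : (Bs :=: S)%MS.
Proof.
apply: eqmx_trans (eq_row_base S).
exact: eqmx_schmidt_free (row_base_free S).
Qed.

Lemma qS_idem : qS *m qS = qS.
Proof. by rewrite /qS -!mulmxA [X in Bs^T *m X]mulmxA Bs_unit mul1mx. Qed.

Lemma pS_idem : pS *m pS = pS.
Proof.
by rewrite /pS mulmxBl mul1mx mulmxBr mulmx1 qS_idem subrr subr0.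
Qed.

Lemma qS_herm i j : (qS j i)^* = qS i j.
Proof.
rewrite !mxE rmorph_sum; apply: eq_bigr => k _.
by rewrite !mxE rmorphM /= conjCK mulrC.
Qed.

Lemma pS_herm i j : (pS j i)^* = pS i j.
Proof.
have h := qS_herm i j; rewrite /qS !mxE in h.
rewrite /pS /qS !mxE rmorphB /= h; congr (_ - _).
by rewrite conjC_nat eq_sym.
Qed.

Lemma pS_kill (u : 'rV[C]_d) : (u <= S)%MS -> forall i, \sum_j pS i j * u 0 j = 0.
Proof.
move=> uS i.
have : (u <= Bs)%MS by rewrite Bs_eq.
case/submxP => w ->.
have h : pS *m (w *m Bs)^T = 0.
  rewrite /pS mulmxBl mul1mx /qS trmx_mul -!mulmxA [map_mx _ _ *m (_ *m _)]mulmxA.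
  by rewrite Bs_unit mul1mx subrr.
have := congr1 (fun M : 'M[C]_(d,1) => M i 0) h; rewrite !mxE => hh.
rewrite -[RHS]hh; apply: eq_bigr => j _; by rewrite !mxE.
Qed.

Lemma qS_range j : (\row_k qS k j <= S)%MS.
Proof.
have -> : \row_k qS k j = row j (qS^T).
  by apply/rowP => k; rewrite !mxE.
rewrite /qS trmx_mul row_mul -Bs_eq.
by rewrite trmxK; exact: submxMl.
Qed.

Lemma qS_pS i j : qS i j = (i == j)%:R - pS i j.
Proof. by rewrite /pS !mxE opprB addrC subrK. Qed.

End Proj.

Section Main.
Variables (C : numClosedFieldType) (N d : nat).
Local Notation conf := (conf N d).
Local Notation op := (op C N d).
Local Notation vec := (vec C N d).
Local Notation n := #|{: conf}|.

Lemma sum_conf (F : conf -> C) :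
  \sum_(b : conf) F b = \sum_(k < n) F (enum_val k).
Proof.
rewrite (reindex (@enum_val _ (pred_of_simpl (@predT conf)))) //.
by exists enum_rank => [k _|b _]; [exact: enum_valK | exact: enum_rankK].
Qed.

Definition tomx (A : op) : 'M[C]_n := \matrix_(i, j) A (enum_val i) (enum_val j).
Definition frommx (M : 'M[C]_n) : op := fun a b => M (enum_rank a) (enum_rank b).

Lemma tomxE (A : op) a b : tomx A (enum_rank a) (enum_rank b) = A a b.
Proof. by rewrite mxE !enum_rankK. Qed.

Lemma opmul_frommx (M : 'M[C]_n) (P : op) a b :
  opmul (frommx M) P a b = (M *m tomx P) (enum_rank a) (enum_rank b).
Proof.
rewrite /opmul sum_conf mxE; apply: eq_bigr => k _.
by rewrite /frommx enum_valK !mxE enum_rankK.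
Qed.

Lemma opapply_mx (P : op) (K : 'M[C]_n) j a :
  opapply P (fun b => K (enum_rank b) j) a = (tomx P *m K) (enum_rank a) j.
Proof.
rewrite /opapply sum_conf mxE; apply: eq_bigr => k _.
by rewrite enum_valK !mxE enum_rankK.
Qed.

End Main.

Theorem lemma5p1 (C : numClosedFieldType) (N d : nat) (adj : rel 'I_N)
  (adj_sym : symmetric adj) (adj_irr : irreflexive adj)
  (adj_conn : forall x y : 'I_N, connect adj x y)
  (S : 'M[C]_d) (O : op C N d) :
  annihilates_Sym S O ->
  exists (o1 P1 : 'I_N -> op C N d) (o2 P2 : 'I_N -> 'I_N -> op C N d),
    (forall x : 'I_N, acts_on1 x (P1 x) /\ is_orth_proj (P1 x)
                      /\ annihilates_Sym S (P1 x)) /\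
    (forall x y : 'I_N, (x < y)%N -> adj x y ->
        acts_on2 x y (P2 x y) /\ is_orth_proj (P2 x y)
        /\ annihilates_Sym S (P2 x y)) /\
    (forall a b : conf N d,
       O a b = \sum_(x : 'I_N) opmul (o1 x) (P1 x) a b
             + \sum_(x : 'I_N) \sum_(y : 'I_N | (x < y)%N && adj x y)
                   opmul (o2 x y) (P2 x y) a b).
Proof.
move=> hO.
pose P1 := fun x : 'I_N => (site1 x (pS S) : op C N d).
pose P2 := fun x y : 'I_N => (site2 x y (@q2 C d) : op C N d).
pose B1 := (\sum_(x : 'I_N) tomx (P1 x))%MS.
pose B2 := (\sum_(e : 'I_N * 'I_N | (e.1 < e.2)%N && adj e.1 e.2) tomx (P2 e.1 e.2))%MS.
have kill : forall P : op C N d, (tomx P <= (B1 + B2))%MS -> forall j a,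
    opapply P (fun b => cokermx (B1 + B2)%MS (enum_rank b) j) a = 0.
  move=> P /submxP [X hX] j a.
  by rewrite opapply_mx hX -mulmxA mulmx_coker mulmx0 mxE.
have sub1 : forall x, (tomx (P1 x) <= B1 + B2)%MS.
  move=> x; apply: submx_trans (addsmxSl _ _); exact: (sumsmx_sup x).
have sub2 : forall x y : 'I_N, (x < y)%N -> adj x y -> (tomx (P2 x y) <= B1 + B2)%MS.
  move=> x y lt e; apply: submx_trans (addsmxSr _ _).
  by apply: (sumsmx_sup (x, y)) => //=; rewrite lt e.
have main : (tomx O <= B1 + B2)%MS.
  rewrite submxE; apply/eqP/matrixP => i j; rewrite [RHS]mxE.
  set v := fun b => cokermx (B1 + B2)%MS (enum_rank b) j.
  have hs : in_Sym S v.
    split.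
      have hv : forall x a, opapply (site1 x (pS S)) v a = 0.
        by move=> x a; exact: (kill _ (sub1 x) j a).
      exists #|{: conf N d}|, (fun k => v (enum_val k)),
        (fun k x => \row_l qS S l ((enum_val k : conf N d) x)); split.
        by move=> k x; exact: qS_range.
      move=> b; rewrite (v_Q (qS_pS S) hv b) sum_conf; apply: eq_bigr => k _.
      rewrite mulrC; congr (_ * _); rewrite /prod_vec; apply: eq_bigr => x _.
      by rewrite mxE.
    apply: (v_sym adj_sym adj_irr adj_conn).
    by move=> x y lt e a; exact: (kill _ (sub2 x y lt e) j a).
  by move: (hO v hs (enum_val i)); rewrite opapply_mx enum_valK.
case/sub_addsmxP: main => [[u1 u2] /= hOu].
have /sub_sumsmxP [w1 hw1] : (u1 *m B1 <= B1)%MS by exact: submxMl.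
have /sub_sumsmxP [w2 hw2] : (u2 *m B2 <= B2)%MS by exact: submxMl.
exists (fun x => frommx (w1 x)), P1, (fun x y => frommx (w2 (x, y))), P2.
split; [|split].
- move=> x; split; first by exists (pS S).
  split; [exact: site1_orth (pS_idem S) (pS_herm S) | exact: site1_annih (@pS_kill _ _ S)].
- move=> x y lt e; have nxy : x != y by rewrite neq_ltn lt.
  split; first by exists (@q2 C d).
  split; [split=> a b; [exact: A2_mul | exact: A2_adj] | exact: A2_annih].
- move=> a b; rewrite -tomxE hOu hw1 hw2 mxE !summxE.
  congr (_ + _); first by apply: eq_bigr => x _; rewrite opmul_frommx.
  rewrite [RHS]pair_big_dep.
  by apply: eq_bigr => [[x y]] _; rewrite opmul_frommx.
Qed.
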